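(* Let $G$ be a finite abstract simplicial complex with connection matrix $L$ and $g=L^{-1}$. Then for every $x\in G$, $g(x,x)=1-\chi(S(x))$.
   Context: A finite abstract simplicial complex $G$ is a finite set of non-empty finite sets closed under taking non-empty subsets. The connection matrix $L$ has $L(x,y)=1$ if $x\cap y\neq\emptyset$ and $0$ otherwise. The Barycentric refinement $G_1$ is the graph with vertex set $G$ where $x\neq y$ are adjacent iff $x\subset y$ or $y\subset x$. $S(x)$ is the set of $y\in G$ with $y\subsetneq x$ or $x\subsetneq y$, and $\chi(S(x))$ is the Euler characteristic $\sum_K(-1)^{|K|-1}$ over non-empty cliques $K$ of the subgraph of $G_1$ induced on $S(x)$. *)

(* Defs.v *)
From mathcomp Require Import all_boot all_order all_algebra.
Set Implicit Arguments. Unset Strict Implicit. Unset Printing Implicit Defensive.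
Import GRing.Theory Num.Theory.
Local Open Scope ring_scope.

Section Complex.
Variable V : finType.

Definition simplicial_complex (G : {set {set V}}) : Prop :=
  set0 \notin G /\
  forall x y : {set V}, x \in G -> y \subset x -> y != set0 -> y \in G.

Definition connection_matrix (G : {set {set V}}) : 'M[int]_(#|G|) :=
  \matrix_(i < #|G|, j < #|G|)
    (if (enum_val i :&: enum_val j) != set0 then 1 else 0).

Definition unit_sphere (G : {set {set V}}) (x : {set V}) : {set {set V}} :=
  [set y in G | (y \proper x) || (x \proper y)].

(* cliques in the Barycentric refinement G_1 (comparability graph) *)
Definition is_clique (K : {set {set V}}) : bool :=
  [forall a in K, forall b in K, (a != b) ==> ((a \proper b) || (b \proper a))].

Definition euler_char (A : {set {set V}}) : int :=
  \sum_(K : {set {set V}} | [&& K != set0, K \subset A & is_clique K])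
    (-1) ^+ (#|K|.-1).

End Complex.

(* Main.v *)
Require Import Defs.
From mathcomp Require Import all_boot all_order all_algebra.
Set Implicit Arguments. Unset Strict Implicit. Unset Printing Implicit Defensive.
Import GRing.Theory Num.Theory.
Local Open Scope ring_scope.

Section S.
Variable V : finType.
Implicit Types (x y z a b m D : {set V}) (A B U K G : {set {set V}}).

Lemma sum_powerset D :
  \sum_(w : {set V} | w \subset D) (-1) ^+ #|w| = (D == set0)%:R :> int.
Proof.
have := @bigA_distr int 0 1 *%R +%R V
  (fun i : V => if i \in D then -1 else 0 : int) (fun _ => 1).
rewrite /= => E.
have -> : (D == set0)%:R = \prod_(i : V) ((if i \in D then -1 else 0) + 1) :> int.
  case: (set_0Vmem D) => [->|[d dD]].
    by rewrite eqxx big1 // => i _; rewrite inE add0r.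
  rewrite (bigD1 d) //= dD addNr mul0r.
  by case: eqP => // D0; move: dD; rewrite D0 inE.
rewrite E big_mkcond /=; apply: eq_bigr => J _.
rewrite -big_mkcond /=.
case: ifP => [/subsetP JD|/negbT /subsetPn [i iJ iD]].
  by rewrite (eq_bigr (fun _ => -1)) ?prodr_const // => i /JD ->.
by rewrite (bigD1 i) //= (negbTE iD) mul0r.
Qed.

Lemma interval_sum a b : a \subset b ->
  \sum_(m : {set V} | (a \subset m) && (m \subset b)) (-1) ^+ #|m|
    = (a == b)%:R * (-1) ^+ #|a| :> int.
Proof.
move=> ab.
rewrite (reindex_onto (fun w => a :|: w) (fun m => m :\: a)); last first.
  by move=> m /andP[am _]; rewrite -{2}(setID m a) (setIidPr am).
rewrite (eq_bigl (fun w : {set V} => w \subset b :\: a)); last first.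
  move=> w; rewrite subsetUl /= subUset ab /= setDUl setDv set0U subsetD.
  by congr (_ && _); apply/idP/idP => [/eqP/setDidPl|/setDidPl ->] //.
rewrite (eq_bigr (fun w : {set V} => (-1) ^+ #|a| * (-1) ^+ #|w|)); last first.
  move=> w; rewrite subsetD disjoint_sym => /andP[_ /disjoint_setI0 aw].
  rewrite -exprD; congr (_ ^+ _).
  by have := cardsUI a w; rewrite aw cards0 addn0.
rewrite -big_distrr /= sum_powerset mulrC; congr (_ * _).
by rewrite setD_eq0 eqEsubset ab.
Qed.

Lemma is_cliqueP K : reflect
  (forall a b, a \in K -> b \in K -> a != b -> (a \proper b) || (b \proper a))
  (is_clique K).
Proof.
apply: (iffP forall_inP) => [H a b aK bK ab|H a aK].
  by have /forall_inP/(_ b bK)/implyP := H a aK; apply.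
by apply/forall_inP => b bK; apply/implyP; exact: H.
Qed.

Lemma clique_sub K K' : K' \subset K -> is_clique K -> is_clique K'.
Proof.
move=> /subsetP sub /is_cliqueP H; apply/is_cliqueP => a b aK bK; apply: H; exact: sub.
Qed.

Lemma clique_max K : K != set0 -> is_clique K ->
  {m | m \in K & forall k, k \in K -> k \subset m}.
Proof.
move=> K0 /is_cliqueP H.
have : (0 < #|K|)%N by rewrite card_gt0.
case/(eq_bigmax_cond (fun k : {set V} => #|k|)) => m mK Em.
exists m => // k kK.
case: (eqVneq k m) => [-> //|km].
case/orP: (H k m kK mK km) => [/proper_sub //|mk].
have := leq_bigmax_cond (P := fun i => i \in K) (F := fun k : {set V} => #|k|) _ kK; rewrite Em.
by rewrite leqNgt (proper_card mk).
Qed.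

Definition Fc A : int :=
  \sum_(K : {set {set V}} | (K \subset A) && is_clique K) (-1) ^+ #|K|.
Definition down A m := [set z in A | z \proper m].

Lemma Fc_rec A : Fc A = 1 - \sum_(m in A) Fc (down A m).
Proof.
pose Q m (K : {set {set V}}) := (m \in K) && [forall k in K, k \subset m].
have step : forall m, m \in A -> Fc (down A m) =
    - \sum_(K : {set {set V}} | (K \subset A) && is_clique K) (if Q m K then (-1) ^+ #|K| else 0).
  move=> m mA; rewrite -big_mkcondr /=.
  rewrite (reindex_onto (fun K' : {set {set V}} => m |: K') (fun K : {set {set V}} => K :\ m)); last first.
    by move=> K /andP[_ /andP[mK _]]; rewrite setD1K.
  rewrite /Fc -sumrN; apply: eq_big => K'.
    apply/idP/idP.
    - move=> /andP[/subsetP K'A cK'].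
      have mK' : m \notin K'.
        by apply/negP => /K'A; rewrite inE properxx andbF.
      rewrite setU1K // eqxx andbT /Q setU11 /=.
      apply/andP; split; first (apply/andP; split).
      + apply/subsetP => k; rewrite !inE => /orP[/eqP -> //|/K'A]; by rewrite inE => /andP[].
      + apply/is_cliqueP => a b; rewrite !inE => /orP[/eqP->|aK] /orP[/eqP->|bK].
        * by rewrite eqxx.
        * by move: (K'A _ bK); rewrite inE => /andP[_ ->]; rewrite orbT.
        * by move: (K'A _ aK); rewrite inE => /andP[_ ->].
        * by move/is_cliqueP: cK'; apply.
      + apply/forall_inP => k; rewrite !inE => /orP[/eqP -> //|/K'A].
        by rewrite inE => /andP[_ /proper_sub].
    - move=> /andP[/andP[/andP[/subsetP KA cK] /andP[_ /forall_inP km]] /eqP E].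
      have mK' : m \notin K' by rewrite -E !inE eqxx.
      apply/andP; split; last by apply: clique_sub cK; rewrite subsetUr.
      apply/subsetP => k kK'; rewrite inE KA ?inE ?kK' ?orbT //=.
      rewrite properEneq km ?inE ?kK' ?orbT // andbT.
      by apply: contraNneq mK' => <-.
  move=> /andP[/subsetP K'A _].
  have mK' : m \notin K'.
    by apply/negP => /K'A; rewrite inE properxx andbF.
  by rewrite cardsU1 mK' exprS mulN1r opprK.
have -> : \sum_(m in A) Fc (down A m) = \sum_(m in A)
    - \sum_(K : {set {set V}} | (K \subset A) && is_clique K) (if Q m K then (-1) ^+ #|K| else 0).
  by apply: eq_bigr => m mA; rewrite step.
rewrite sumrN opprK exchange_big /=.
rewrite /Fc (bigD1 set0) /=; last by rewrite sub0set; apply/is_cliqueP => a b; rewrite inE.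
rewrite cards0 expr0.
congr (1 + _).
rewrite [in RHS](bigD1 set0) /=; last by rewrite sub0set; apply/is_cliqueP => a b; rewrite inE.
rewrite [X in _ = X + _]big1 ?add0r; last by move=> m _; rewrite /Q in_set0.
apply: eq_bigr => K /andP[/andP[KA cK] K0].
rewrite -big_mkcondr /=.
have [m mK mmax] := clique_max K0 cK.
rewrite (big_pred1 m) // => m'; rewrite /= /Q.
apply/idP/idP.
- move=> /andP[_ /andP[m'K /forall_inP m'max]].
  by rewrite eqEsubset mmax // m'max.
- move=> /eqP ->; rewrite (subsetP KA) //= mK /=; apply/forall_inP; exact: mmax.
Qed.

Lemma sgn_sq n : (-1) ^+ n * (-1) ^+ n = 1 :> int.
Proof. by rewrite -exprMn mulrNN mulr1 expr1n. Qed.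

Lemma Fc_join B U : (forall b u, b \in B -> u \in U -> b \proper u) ->
  Fc (B :|: U) = Fc B * Fc U.
Proof.
elim: {U}_.+1 {-2}U (ltnSn #|U|) => // n IH U Un BU.
have disj : [disjoint B & U].
  apply/pred0P => z /=; apply/negP => /andP[zB zU].
  by have := BU _ _ zB zU; rewrite properxx.
rewrite Fc_rec (eq_bigl [predU B & U]); last by move=> z; rewrite !inE.
rewrite bigU //=.
have E1 : \sum_(m in B) Fc (down (B :|: U) m) = \sum_(m in B) Fc (down B m).
  apply: eq_bigr => m mB; congr Fc; apply/setP => z; rewrite !inE.
  case zU: (z \in U); rewrite ?orbF //.
  have mz := BU _ _ mB zU.
  have -> : z \proper m = false.
    by apply/negP => zm; have := proper_trans zm mz; rewrite properxx.
  by rewrite !andbF.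
have E2 : \sum_(m in U) Fc (down (B :|: U) m) = \sum_(m in U) (Fc B * Fc (down U m)).
  apply: eq_bigr => m mU.
  have -> : down (B :|: U) m = B :|: down U m.
    apply/setP => z; rewrite !inE.
    by case zB: (z \in B); rewrite //= BU.
  apply: IH.
    apply: (leq_trans _ (Un : (#|U| <= n)%N)); apply: proper_card; rewrite properE; apply/andP; split.
      by apply/subsetP => z; rewrite inE => /andP[].
    by apply/subsetP => /(_ m mU); rewrite inE properxx andbF.
  by move=> b u bB; rewrite inE => /andP[uU _]; apply: BU.
rewrite E1 E2 -big_distrr /= [Fc B]Fc_rec [Fc U]Fc_rec.
set X := \sum_(m in B) _; set Y := \sum_(m in U) _.
by rewrite mulrBr mulr1 opprD addrA.
Qed.

Definition Oint a b := [set z : {set V} | (a \proper z) && (z \proper b)].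

Lemma Oint_sum a b : a \proper b ->
  \sum_(m in Oint a b) (-1) ^+ #|m| = - ((-1) ^+ #|a| + (-1) ^+ #|b|) :> int.
Proof.
move=> ab; have sab := proper_sub ab.
have := interval_sum sab.
have -> : (a == b) = false by apply/negbTE; move: ab; rewrite properEneq => /andP[].
rewrite mul0r (bigD1 a) /= ?subxx ?sab // (bigD1 b) /=; last first.
  by rewrite sab subxx eq_sym; move: ab; rewrite properEneq => /andP[].
rewrite (eq_bigl (fun m => m \in Oint a b)); last first.
  move=> m; rewrite !inE !properEneq.
  by rewrite [a == m]eq_sym; case: (a \subset m); case: (m \subset b); case: (m == a); case: (m == b).
by move/eqP; rewrite addrA addrC addr_eq0 => /eqP ->.
Qed.

Lemma Fc_interval n a b : (#|b| < n)%N -> a \proper b ->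
  Fc (Oint a b) = - ((-1) ^+ #|a| * (-1) ^+ #|b|).
Proof.
elim: n a b => // n IH a b bn ab.
rewrite Fc_rec.
rewrite (eq_bigr (fun m => - ((-1) ^+ #|a| * (-1) ^+ #|m|))); last first.
  move=> m; rewrite inE => /andP[am mb].
  have -> : down (Oint a b) m = Oint a m.
    apply/setP => z; rewrite !inE -andbA; congr (_ && _).
    case zm: (z \proper m); rewrite ?andbF ?andbT //.
    exact: proper_trans zm mb.
  apply: IH am; apply: leq_trans (proper_card mb) _; exact: bn.
rewrite sumrN opprK -big_distrr /= Oint_sum // mulrN mulrDr sgn_sq.
by rewrite opprD addrA subrr add0r.
Qed.

Lemma sc_closed G : simplicial_complex G -> forall x z, x \in G -> z \subset x ->
  (z \in G) = (z != set0).
Proof.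
case=> G0 Gc x z xG zx; apply/idP/idP => [zG|z0]; last exact: Gc zx z0.
by apply: contraNneq G0 => <-.
Qed.

Lemma sum_G G (F : {set V} -> int) :
  \sum_(i < #|G|) F (enum_val i) = \sum_(z in G) F z.
Proof. by rewrite (big_enum_val (A := mem G)). Qed.


Definition sg z : int := (-1) ^+ #|z|.

Definition Zm G : 'M[int]_(#|G|) :=
  \matrix_(i < #|G|, j < #|G|) ((enum_val i \subset enum_val j)%:R : int).
Definition Wm G : 'M[int]_(#|G|) :=
  \matrix_(i < #|G|, j < #|G|)
    (if enum_val i \subset enum_val j then sg (enum_val i) * sg (enum_val j) else 0).
Definition Om G : 'M[int]_(#|G|) :=
  \matrix_(i < #|G|, j < #|G|) ((i == j)%:R * - sg (enum_val i)).

Lemma sg_sq z : sg z * sg z = 1.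
Proof. exact: sgn_sq. Qed.

Lemma mul_diag_r n (A : 'M[int]_n) (d : 'I_n -> int) :
  A *m (\matrix_(i < n, j < n) ((i == j)%:R * d i)) = \matrix_(i < n, j < n) (A i j * d j).
Proof.
apply/matrixP => i j; rewrite !mxE (bigD1 j) //= big1 ?addr0.
  by rewrite mxE eqxx mul1r.
by move=> k /negbTE kj; rewrite mxE kj mul0r mulr0.
Qed.

Lemma L_fact G : simplicial_complex G ->
  connection_matrix G = (Zm G)^T *m Om G *m Zm G.
Proof.
move=> sc; rewrite /Om mul_diag_r; apply/matrixP => i j; rewrite !mxE.
under eq_bigr => k _ do rewrite !mxE.
rewrite (sum_G G (fun z => (z \subset enum_val i)%:R * - sg z * (z \subset enum_val j)%:R)).
set x := enum_val i; set y := enum_val j.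
have xG : x \in G by apply: enum_valP.
rewrite (eq_bigr (fun z => if z \subset x :&: y then - sg z else 0)); last first.
  by move=> z _; rewrite subsetI; case: (z \subset x); case: (z \subset y);
    rewrite ?mul0r ?mulr0 ?mulr1 ?mul1r.
rewrite -big_mkcondr /=.
rewrite (eq_bigl (fun z => (z \subset x :&: y) && (z != set0))); last first.
  move=> z; rewrite subsetI; case zx: (z \subset x); rewrite ?andbF //=.
  by rewrite (sc_closed sc xG zx) andbC.
have := sum_powerset (x :&: y).
rewrite (bigD1 set0) ?sub0set //= cards0 expr0.
move/(congr1 (fun t => - t)); rewrite opprD sumrN.
rewrite /sg => E; apply/(addrI (-1)); rewrite E.
by case: (x :&: y == set0).
Qed.

Lemma ZW G : simplicial_complex G -> Zm G *m Wm G = 1%:M.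
Proof.
move=> sc; apply/matrixP => i j; rewrite !mxE.
under eq_bigr => k _ do rewrite !mxE.
rewrite (sum_G G (fun z => (enum_val i \subset z)%:R *
   (if z \subset enum_val j then sg z * sg (enum_val j) else 0))).
have -> : (i == j) = (enum_val i == enum_val j) by rewrite (inj_eq enum_val_inj).
set x := enum_val i; set y := enum_val j.
have xG : x \in G by apply: enum_valP.
have yG : y \in G by apply: enum_valP.
have x0 : x != set0 by apply: contraTneq xG => ->; exact: sc.1.
rewrite (eq_bigr (fun z => if (x \subset z) && (z \subset y) then sg z * sg y else 0)); last first.
  by move=> z _; case: (x \subset z); rewrite ?mul1r ?mul0r.
rewrite -big_mkcondr /=.
case xy: (x \subset y); last first.
  rewrite big_pred0; last first.
    move=> z; apply/negbTE/negP => /andP[_ /andP[xz zy]].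
    by move: xy; rewrite (subset_trans xz zy).
  by case: eqP => // exy; move: xy; rewrite exy subxx.
rewrite (eq_bigl (fun z => (x \subset z) && (z \subset y))); last first.
  move=> z; case xz: (x \subset z); rewrite ?andbF //=.
  case zy: (z \subset y); rewrite ?andbF //= (sc_closed sc yG zy).
  rewrite andbT; apply/eqP => z0; by move: x0; rewrite -subset0 -z0 xz.
rewrite -big_distrl /= interval_sum //.
by case: eqP => [->|_]; rewrite ?mul1r ?sg_sq ?mul0r.
Qed.

Lemma OO G : Om G *m Om G = 1%:M.
Proof.
rewrite {2}/Om mul_diag_r; apply/matrixP => i j; rewrite !mxE.
by case: eqP => [->|_]; rewrite ?mul0r // mul1r mulrNN sg_sq.
Qed.

Lemma Lg G : simplicial_complex G ->
  connection_matrix G *m (Wm G *m Om G *m (Wm G)^T) = 1%:M.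
Proof.
move=> sc; rewrite L_fact // !mulmxA -(mulmxA _ (Zm G)) ZW // mulmx1.
rewrite -(mulmxA _ (Om G) (Om G)) OO mulmx1 -trmx_mul.
by rewrite (mulmx1C (ZW sc)) trmx1.
Qed.

Lemma g_diag G (i : 'I_#|G|) :
  (Wm G *m Om G *m (Wm G)^T) i i = - \sum_(z in G | enum_val i \subset z) sg z.
Proof.
rewrite /Om mul_diag_r !mxE.
under eq_bigr => k _ do rewrite !mxE.
rewrite (sum_G G (fun z => (if enum_val i \subset z then sg (enum_val i) * sg z else 0)
   * - sg z * (if enum_val i \subset z then sg (enum_val i) * sg z else 0))).
rewrite -sumrN big_mkcondr /=; apply: eq_bigr => z _.
case: (enum_val i \subset z); rewrite ?mul0r ?oppr0 //.
rewrite mulrN mulNr; congr (- _).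
by rewrite -[sg (enum_val i) * sg z * sg z]mulrA sg_sq mulr1 mulrA sg_sq mul1r.
Qed.

Lemma Fc_euler A : Fc A = 1 - euler_char A.
Proof.
rewrite /Fc /euler_char (bigD1 set0) /=; last first.
  by rewrite sub0set; apply/is_cliqueP => a b; rewrite inE.
rewrite cards0 expr0 -sumrN; congr (1 + _).
apply: eq_big => [K|K /andP[_ K0]].
  by rewrite andbC andbA.
have K1 : (0 < #|K|)%N by rewrite card_gt0.
by rewrite -{1}(prednK K1) exprS mulN1r.
Qed.

Lemma sphere G x : simplicial_complex G -> x \in G ->
  Fc (unit_sphere G x) = - \sum_(z in G | x \subset z) sg z.
Proof.
move=> sc xG.
have x0 : x != set0 by apply: contraTneq xG => ->; exact: sc.1.
set B := [set y in G | y \proper x]; set U := [set y in G | x \proper y].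
have -> : unit_sphere G x = B :|: U.
  by apply/setP => y; rewrite !inE; case: (y \in G).
rewrite Fc_join; last first.
  by move=> b u; rewrite !inE => /andP[_ bx] /andP[_ xu]; exact: proper_trans bx xu.
have -> : B = Oint set0 x.
  apply/setP => y; rewrite !inE proper0.
  case yx: (y \proper x); rewrite ?andbF ?andbT //.
  by apply: (sc_closed sc xG); apply: proper_sub; rewrite yx.
rewrite (@Fc_interval #|x|.+1) ?proper0 // cards0 expr0 mul1r.
rewrite Fc_rec.
rewrite (eq_bigr (fun m => - (sg x * sg m))); last first.
  move=> m; rewrite inE => /andP[mG xm].
  have -> : down U m = Oint x m.
    apply/setP => z; rewrite !inE.
    case zm: (z \proper m); rewrite ?andbF ?andbT //.
    case xz: (x \proper z); rewrite ?andbF ?andbT //.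
    rewrite (sc_closed sc mG (proper_sub zm)).
    apply: contraTneq xz => ->; by rewrite properE sub0set andbF.
  by rewrite (@Fc_interval #|m|.+1).
rewrite [in RHS](bigD1 x) /= ?xG ?subxx //.
rewrite [in RHS](eq_bigl (fun z => z \in U)); last first.
  move=> z; rewrite !inE properEneq eq_sym.
  by case: (z \in G); case: (x \subset z); case: (x != z).
rewrite sumrN opprK -big_distrr /= mulrDr mulr1 mulrA -/(sg x).
by rewrite mulNr sg_sq mulN1r opprD.
Qed.
End S.

Theorem mainTheorem9 (V : finType) (G : {set {set V}}) :
  simplicial_complex G ->
  connection_matrix G \in unitmx /\
  forall i : 'I_#|G|,
    (invmx (connection_matrix G)) i i
      = 1 - euler_char (unit_sphere G (enum_val i)).
Proof.
move=> sc.
have H := Lg sc.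
have [Lu _] := mulmx1_unit H.
split=> // i.
have -> : invmx (connection_matrix G) = Wm G *m Om G *m (Wm G)^T.
  by rewrite -[RHS]mul1mx -(mulVmx Lu) -(mulmxA (invmx _)) H mulmx1.
by rewrite g_diag -(sphere sc (enum_valP i)) Fc_euler.
Qed.
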